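(* Let $K\ge1$ and let $\theta_1,\dots,\theta_K$ be unknown parameters with $\theta_i\in\Theta_i$. Data $\mathbf X=(X_1,\dots,X_K)$ are sampled from an unknown distribution (the $X_i$ may be arbitrarily dependent). For each $i\in[K]$ let $(E_i(\theta))_{\theta\in\Theta_i}$ be a family of e-values (for every $\theta\in\Theta_i$, $E_i(\theta)\ge0$ and $\mathbb{E}[E_i(\theta)]\le1$ whenever $\theta$ is the true value of $\theta_i$), and let $C_i(\alpha)=\{\theta\in\Theta_i: E_i(\theta)<1/\alpha\}$ be the associated marginal e-CIs. Let $\mathcal S$ be any selection rule and $S=\mathcal S(\mathbf X)\subseteq[K]$. The e-BY procedure at level $\delta\in(0,1)$ reports, for each $i\in S$, the interval $C_i(\alpha_i)$ with $\alpha_i=\delta|S|/K$. Then $$\mathrm{FCR}=\mathbb{E}\left[\frac{\sum_{i\in S}\mathbf 1\{\theta_i\notin C_i(\delta|S|/K)\}}{|S|\vee 1}\right]\le\delta .$$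
   Context: $[K]=\{1,\dots,K\}$. The false coverage rate (FCR) is the expectation of the false coverage proportion, the fraction of selected parameters not covered by their reported intervals. *)

(* Defs.v *)
From HB Require Import structures.
From mathcomp Require Import all_boot all_order all_algebra.
From mathcomp Require Import all_classical all_reals all_analysis.
Set Implicit Arguments. Unset Strict Implicit. Unset Printing Implicit Defensive.
Import Order.TTheory GRing.Theory Num.Theory.
Local Open Scope classical_set_scope.
Local Open Scope ring_scope.

Definition eCI (R : realType) (Omega Theta : Type)
  (Ei : Theta -> Omega -> R) (alpha : R) (w : Omega) : set Theta :=
  [set t | Ei t w < alpha^-1].

Definition eBY_level (R : realType) (K : nat) (delta : R) (S : {set 'I_K}) : R :=
  delta * #|S|%:R / K%:R.

Definition eBY_FCP (R : realType) (Omega : Type) (K : nat)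
  (Theta : 'I_K -> Type) (theta : forall i, Theta i)
  (E : forall i, Theta i -> Omega -> R) (S : Omega -> {set 'I_K})
  (delta : R) (w : Omega) : R :=
  (\sum_(i in S w)
      (theta i \notin eCI (E i) (eBY_level delta (S w)) w)%:R)
  / (maxn #|S w| 1)%:R.

(* Main.v *)
Require Import Defs.
From HB Require Import structures.
From mathcomp Require Import all_boot all_order all_algebra.
From mathcomp Require Import all_classical all_reals all_analysis.
From mathcomp Require Import ring lra.
Import Order.TTheory GRing.Theory Num.Theory.
Local Open Scope classical_set_scope.
Local Open Scope ring_scope.

Lemma mono_int (R : realType) d (T : measurableType d) (mu : {measure set T -> \bar R})
  (f g : T -> \bar R) : (forall x, (0 <= f x)%E) -> (forall x, (f x <= g x)%E) ->
  (\int[mu]_x f x <= \int[mu]_x g x)%E.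
Proof.
move=> f0 fg.
have g0 x : (0 <= g x)%E by apply: le_trans (fg x).
rewrite !ge0_integralTE //.
apply: ereal_sup_le.
move=> _ [h hf <-]; exists h => //= x; exact: le_trans (hf x) (fg x).
Qed.

Lemma fcp_bound (R : realType) (Omega : Type) (K : nat) (HK : (1 <= K)%N)
  (Theta : 'I_K -> Type) (theta : forall i, Theta i)
  (E : forall i, Theta i -> Omega -> R)
  (E_ge0 : forall i (t : Theta i) (w : Omega), 0 <= E i t w)
  (S : Omega -> {set 'I_K}) (delta : R) (Hdelta : 0 < delta < 1) w :
  0 <= eBY_FCP theta E S delta w /\
  eBY_FCP theta E S delta w <= delta / K%:R * \sum_i E i (theta i) w.
Proof.
case/andP: Hdelta => d0 d1.
have K0 : 0 < K%:R :> R by rewrite ltr0n.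
have rhs0 : 0 <= delta / K%:R * \sum_i E i (theta i) w.
  apply: mulr_ge0; first by apply: divr_ge0; [exact: ltW|exact: ltW].
  by apply: sumr_ge0 => i _.
rewrite /eBY_FCP; split.
  apply: divr_ge0; last by [].
  by apply: sumr_ge0 => i _.
have [S0|SN] := eqVneq (S w) finset.set0.
  by rewrite S0 big_set0 mul0r.
have n1 : (0 < #|S w|)%N by rewrite card_gt0.
have -> : maxn #|S w| 1 = #|S w| by apply/maxn_idPl.
set n := #|S w|.
have n0 : 0 < n%:R :> R by rewrite ltr0n.
set a := eBY_level delta (S w).
have a0 : 0 < a by rewrite /a /eBY_level; apply: divr_gt0 => //; apply: mulr_gt0.
apply: le_trans (_ : (\sum_(i in S w) E i (theta i) w * a) / n%:R <= _).
  apply: ler_pM => //; first by apply: sumr_ge0 => i _.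
  apply: ler_sum => i _.
  case: (boolP (theta i \in eCI (E i) a w)) => /= H.
    by rewrite mulr0n; apply: mulr_ge0 => //; exact: ltW.
  rewrite mulr1n.
  have : ~ (E i (theta i) w < a^-1).
    by move=> h; move/negP: H; apply; rewrite inE.
  move/negP; rewrite -leNgt => h.
  by apply: le_trans (ler_wpM2r (ltW a0) h); rewrite mulVf ?lt0r_neq0.
rewrite -big_distrl /= /a /eBY_level.
rewrite [X in _ <= X]mulrC.
have -> : (\sum_(i in S w) E i (theta i) w) * (delta * n%:R / K%:R) / n%:R =
          (\sum_(i in S w) E i (theta i) w) * (delta / K%:R).
  by field; apply/andP; split; apply: lt0r_neq0.
apply: ler_pM => //; first by apply: sumr_ge0.
  by apply: divr_ge0; apply: ltW.
rewrite [X in _ <= X](bigID (fun i => i \in S w)) /= lerDl.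
by apply: sumr_ge0 => i _.
Qed.

Theorem theorem2 (R : realType) (d : measure_display) (Omega : measurableType d)
  (P : probability Omega R) (K : nat) (HK : (1 <= K)%N)
  (Theta : 'I_K -> Type) (theta : forall i, Theta i)
  (E : forall i, Theta i -> Omega -> R)
  (E_ge0 : forall i (t : Theta i) (w : Omega), 0 <= E i t w)
  (E_meas : forall i, measurable_fun setT (E i (theta i)))
  (E_eval : forall i, (\int[P]_w (E i (theta i) w)%:E <= 1)%E)
  (S : Omega -> {set 'I_K})
  (S_meas : forall A : {set 'I_K}, measurable [set w | S w = A])
  (delta : R) (Hdelta : 0 < delta < 1) :
  (\int[P]_w (eBY_FCP theta E S delta w)%:E <= delta%:E)%E.
Proof.
have H := @fcp_bound R Omega K HK Theta theta E E_ge0 S delta Hdelta.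
apply: (le_trans (@mono_int R d Omega P _
   (fun w => (delta / K%:R * \sum_i E i (theta i) w)%:E) _ _)).
- by move=> w; rewrite lee_fin; case: (H w).
- by move=> w; rewrite lee_fin; case: (H w).
case/andP: Hdelta => d0 d1.
have K0 : 0 < K%:R :> R by rewrite ltr0n.
rewrite (_ : (fun w => (delta / K%:R * \sum_i E i (theta i) w)%:E) =
   (fun w => ((delta / K%:R)%:E * (\sum_i E i (theta i) w)%:E)%E)); last first.
  by apply: funext => w; rewrite EFinM.
rewrite ge0_integralZl_EFin; [ | by [] |
  by move=> w _; rewrite lee_fin; apply: sumr_ge0 |
  apply/measurable_realfun.measurable_EFinP;
  apply: measurable_sum => i;
  exact: E_meas |
  by apply: divr_ge0; apply: ltW].
under eq_integral do rewrite -sumEFin.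
rewrite ge0_integral_sum; [ | by [] |
  by move=> i; apply/measurable_realfun.measurable_EFinP; exact: E_meas |
  by move=> i w _; rewrite lee_fin].
apply: (le_trans (y := ((delta / K%:R)%:E * (K%:R)%:E)%E)).
  apply: lee_wpmul2l; first by rewrite lee_fin; apply: divr_ge0; apply: ltW.
  apply: (le_trans (y := (\sum_(i < K) 1)%E)).
    by apply: lee_sum => i _; exact: E_eval.
  by rewrite sumEFin big_const_ord iter_addr addr0.
by rewrite (_ : ((delta / K%:R)%:E * (K%:R)%:E)%E = (delta / K%:R * K%:R)%:E) // lee_fin divfK ?lt0r_neq0.
Qed.
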